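(* Let $K(t,u)=1+\frac{14}{15}\sqrt[5]{4\left(t-\frac12\right)\left(u-\frac12\right)}$ for $t,u\in[0,1]$. The Hammerstein operator $(H_2f)(t)=\int_0^1K(t,u)f^2(u)\,du$ on $C[0,1]$ has at least two distinct strictly positive fixed points.
   Context: For real $s$, $\sqrt[5]{s}$ denotes the real fifth root (negative for $s<0$). *)

(* Defs.v *)
From Stdlib Require Import Reals Lra.
Open Scope R_scope.

Definition root5 (s : R) : R :=
  if Rlt_dec 0 s then Rpower s (1/5)
  else if Rlt_dec s 0 then - Rpower (- s) (1/5)
  else 0.

Definition K (t u : R) : R :=
  1 + 14/15 * root5 (4 * (t - 1/2) * (u - 1/2)).

Definition cont01 (f : R -> R) : Prop :=
  forall t, 0 <= t <= 1 -> limit1_in f (fun x => 0 <= x <= 1) (f t) t.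

Definition H2_fixed (f : R -> R) : Prop :=
  forall t, 0 <= t <= 1 ->
    exists pr : Riemann_integrable (fun u => K t u * (f u) ^ 2) 0 1,
      f t = RiemannInt pr.

Definition pos01 (f : R -> R) : Prop := forall t, 0 <= t <= 1 -> 0 < f t.

(* Main.v *)
Require Import Defs.
From Stdlib Require Import Reals Lra Psatz.
From Coquelicot Require Import Coquelicot.
Open Scope R_scope.

Lemma p5pos : forall x y, 0 <= x < y -> x^5 < y^5.
Proof. intros x y H.
 assert (0 < y^4) by (apply pow_lt; lra).
 assert (0 <= y^3*x + y^2*x^2 + y*x^3 + x^4).
 { assert (0<= x^2) by nra. assert (0<=y^2) by nra. nra. }
 nra. Qed.

Lemma pow5_lt : forall x y, x < y -> x^5 < y^5.
Proof.
  intros x y H.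
  destruct (Rle_or_lt 0 x) as [Hx|Hx].
  - apply p5pos; lra.
  - destruct (Rle_or_lt 0 y) as [Hy|Hy].
    + assert (0 <= y^5) by (apply pow_le; lra).
      assert (0 < (-x)^5) by (apply pow_lt; lra).
      replace ((-x)^5) with (- x^5) in H1 by ring. lra.
    + assert ((-y)^5 < (-x)^5) by (apply p5pos; lra).
      replace ((-x)^5) with (- x^5) in H0 by ring.
      replace ((-y)^5) with (- y^5) in H0 by ring. lra.
Qed.

Lemma pow5_inj : forall x y, x^5 = y^5 -> x = y.
Proof.
  intros x y H. destruct (Rtotal_order x y) as [h|[h|h]]; auto;
  apply pow5_lt in h; lra.
Qed.

Lemma root5_pow : forall x, root5 x ^ 5 = x.
Proof.
  intros x. unfold root5.
  assert (P : forall z, 0 < z -> Rpower z (1/5) ^ 5 = z).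
  { intros z Hz. rewrite <- Rpower_pow by (unfold Rpower; apply exp_pos).
    rewrite Rpower_mult. replace (1/5 * INR 5) with 1 by (simpl; field).
    apply Rpower_1; auto. }
  destruct (Rlt_dec 0 x). apply P; auto.
  destruct (Rlt_dec x 0). replace ((- Rpower (-x) (1/5))^5) with (- (Rpower (-x) (1/5))^5) by ring.
  rewrite P; lra. simpl. lra.
Qed.

Lemma root5_of_pow : forall s, root5 (s^5) = s.
Proof. intros. apply pow5_inj. apply root5_pow. Qed.

Lemma root5_mult : forall x y, root5 (x*y) = root5 x * root5 y.
Proof. intros. apply pow5_inj. rewrite Rpow_mult_distr, !root5_pow. auto. Qed.

Lemma root5_lt : forall x y, x < y -> root5 x < root5 y.
Proof.
  intros x y H. destruct (Rlt_or_le (root5 x) (root5 y)) as [h|h]; auto.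
  destruct h as [h|h]. apply pow5_lt in h. rewrite !root5_pow in h. lra.
  apply (f_equal (fun z => z^5)) in h. rewrite !root5_pow in h. lra.
Qed.

Lemma root5_cont : forall x, continuity_pt root5 x.
Proof.
  intros x0 eps Heps. set (a := root5 x0).
  assert (h1 : (a-eps)^5 < x0) by (rewrite <- (root5_pow x0); apply pow5_lt; unfold a; lra).
  assert (h2 : x0 < (a+eps)^5) by (rewrite <- (root5_pow x0); apply pow5_lt; unfold a; lra).
  assert (r1 : root5 ((a-eps)^5) = a - eps) by apply root5_of_pow.
  assert (r2 : root5 ((a+eps)^5) = a + eps) by apply root5_of_pow.
  set (p := (a-eps)^5) in *. set (q := (a+eps)^5) in *. clearbody p q.
  exists (Rmin (x0 - p) (q - x0)). split.
  apply Rmin_pos; lra.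
  intros x [_ Hx]. simpl in *. unfold R_dist in *.
  pose proof (Rmin_l (x0 - p) (q - x0)).
  pose proof (Rmin_r (x0 - p) (q - x0)).
  apply Rabs_def2 in Hx. destruct Hx.
  assert (root5 p < root5 x) by (apply root5_lt; lra).
  assert (root5 x < root5 q) by (apply root5_lt; lra).
  apply Rabs_def1; lra.
Qed.

Lemma root5_1 : root5 1 = 1.
Proof. rewrite <- (root5_of_pow 1) at 2. f_equal. ring. Qed.

Lemma root5_le : forall x y, x <= y -> root5 x <= root5 y.
Proof. intros x y [h|h]. left; apply root5_lt; auto. subst; apply Rle_refl. Qed.

Lemma root5_bound : forall u, 0 <= u <= 1 -> -1 <= root5 (2*u-1) <= 1.
Proof.
  intros u Hu. assert (e : root5 (-1) = -1).
  { rewrite <- (root5_of_pow (-1)) at 2. f_equal. ring. }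
  split.
  - apply Rle_trans with (root5 (-1)). rewrite e; apply Rle_refl. apply root5_le; lra.
  - apply Rle_trans with (root5 1). apply root5_le; lra. rewrite root5_1; apply Rle_refl.
Qed.

Lemma root5_lin_cont : forall a b z, continuity_pt (fun u => root5 (a*u+b)) z.
Proof.
  intros a b z. apply (continuity_pt_comp (fun u => a*u+b) root5 z).
  reg. apply root5_cont.
Qed.

Lemma F_cont : forall t al be z,
  continuity_pt (fun u => K t u * (al + be * root5 (2*u-1))^2) z.
Proof.
  intros t al be z. unfold K.
  apply continuity_pt_mult.
  - apply continuity_pt_plus. apply continuity_pt_const; intros ??; auto.
    apply continuity_pt_mult. apply continuity_pt_const; intros ??; auto.
    apply continuity_pt_ext with (fun u => root5 ((4*(t-1/2))*u + (-2*(t-1/2)))).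
    intros; cbv beta; f_equal; field. apply root5_lin_cont.
  - apply continuity_pt_ext with (fun u => (al + be * root5 (2*u+ -1)) * ((al + be * root5 (2*u+ -1)) * 1)).
    intros x; simpl; repeat f_equal; ring.
    assert (C : continuity_pt (fun u => al + be * root5 (2*u + -1)) z).
    { apply continuity_pt_plus. apply continuity_pt_const; intros ??; auto.
      apply continuity_pt_mult. apply continuity_pt_const; intros ??; auto.
      apply root5_lin_cont. }
    apply continuity_pt_mult; auto. apply continuity_pt_mult; auto.
    apply continuity_pt_const; intros ??; auto.
Qed.

Lemma fixed_gen : forall al be, al = al^2 + 5/7 * be^2 -> be = 4/3 * al * be ->
  H2_fixed (fun u => al + be * root5 (2*u-1)).
Proof.
  intros al be H1 H2 t Ht.
  set (F := fun u => K t u * (al + be * root5 (2*u-1))^2).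
  assert (Ex : ex_RInt F 0 1).
  { apply (@ex_RInt_continuous R_CompleteNormedModule). intros z _. apply continuity_pt_filterlim. apply F_cont. }
  exists (ex_RInt_Reals_0 _ _ _ Ex). rewrite <- RInt_Reals.
  set (p := root5 (2*t-1)).
  set (c := 14/15).
  assert (E : RInt F 0 1 = RInt (fun y => scal (5/2 * y^4) (F ((1+y^5)/2))) (-1) 1).
  { rewrite (RInt_comp F (fun y => (1+y^5)/2) (fun y => 5/2*y^4)).
    f_equal; simpl; field.
    intros x _. apply continuity_pt_filterlim. apply F_cont.
    intros x _. split. auto_derive. auto. simpl; field.
    apply continuity_pt_filterlim. reg. }
  rewrite E.
  set (G := fun y => 5/2*(al^2*y^5/5 + (2*al*be+c*p*al^2) * y^6/6 + (be^2+2*c*p*al*be)*y^7/7 + c*p*be^2*y^8/8)).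
  set (P := fun y => 5/2*y^4*((1 + c*(p*y))*(al+be*y)^2)).
  rewrite (RInt_ext _ P).
  2:{ intros x _. match goal with |- ?a = ?b => change (@eq R a b) end. change (scal (5/2*x^4) (F ((1+x^5)/2))) with (5/2*x^4 * F ((1+x^5)/2)). unfold P, F, K.
      replace (2*((1+x^5)/2)-1) with (x^5) by field. rewrite root5_of_pow.
      replace (4*(t-1/2)*((1+x^5)/2-1/2)) with ((2*t-1)*x^5) by field.
      rewrite root5_mult, root5_of_pow. fold p. fold c. ring. }
  rewrite (is_RInt_unique P (-1) 1 (minus (G 1) (G (-1)))).
  2:{ apply (@is_RInt_derive R_CompleteNormedModule).
      - intros x _. unfold G, P. auto_derive. auto. unfold c; field.
      - intros x _. apply continuity_pt_filterlim. unfold P. reg. }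
  unfold minus, plus, opp; simpl. unfold G.
  assert (Hp : p*be = p*(4/3*al*be)) by (rewrite <- H2; auto).
  unfold c. nra.
Qed.

Lemma cont_gen : forall f, (forall t, continuity_pt f t) -> cont01 f.
Proof.
  intros f Hf t _ eps He. destruct (Hf t eps He) as [d [Hd H]].
  exists d; split; auto. intros x [Dx Hx].
  destruct (Req_dec t x) as [e|n].
  - subst. simpl. unfold R_dist. rewrite Rminus_diag, Rabs_R0. lra.
  - apply H; split; [split; [exact I | exact n] | exact Hx].
Qed.

Lemma lin_cont : forall al be t, continuity_pt (fun u => al + be * root5 (2*u-1)) t.
Proof.
  intros. apply continuity_pt_plus. apply continuity_pt_const; intros ??; auto.
  apply continuity_pt_mult. apply continuity_pt_const; intros ??; auto.
  apply continuity_pt_ext with (fun u => root5 (2*u + -1)).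
  intros; cbv beta; f_equal; ring. apply root5_lin_cont.
Qed.

Theorem proposition3p1 :
  exists f g : R -> R,
    cont01 f /\ cont01 g /\ pos01 f /\ pos01 g /\
    H2_fixed f /\ H2_fixed g /\
    exists t, 0 <= t <= 1 /\ f t <> g t.
Proof.
  set (b := sqrt (21/80)).
  assert (Hb2 : b^2 = 21/80) by (unfold b; rewrite <- Rsqr_pow2; apply Rsqr_sqrt; lra).
  assert (Hb0 : 0 <= b) by (apply sqrt_pos).
  assert (Hb : b < 3/4) by nra.
  exists (fun u => 1 + 0 * root5 (2*u-1)), (fun u => 3/4 + b * root5 (2*u-1)).
  split; [apply cont_gen; intro; apply lin_cont|].
  split; [apply cont_gen; intro; apply lin_cont|].
  split; [intros t Ht; lra|].
  split; [intros t Ht; pose proof (root5_bound t Ht); nra|].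
  split; [apply fixed_gen; lra|].
  split; [apply fixed_gen; nra|].
  exists 1. split; [lra|]. replace (2*1-1) with 1 by ring. rewrite root5_1.
  intro h. assert (b = 1/4) by lra. nra.
Qed.
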